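(* Let $J=(a,b)\subseteq\mathbb R$ be an open interval (possibly unbounded) and let $A:J\to\mathbb R$ be of class $C^2$ with $A''$ not changing sign on $J$ (i.e. $A''(x)\ge0$ for all $x\in J$, or $A''(x)\le0$ for all $x\in J$). Then $\mathtt S[\mathrm{Re}K_\Gamma](\mathbf z)\ge0$ for every three-tuple $\mathbf z$ of distinct points on $\Gamma=\{x+iA(x):x\in J\}$.
   Context: $s(x)=\sqrt{1+(A'(x))^2}$. The kernel (normalizing factor $1/(2\pi)$ omitted) is $K_\Gamma(w,z)=\dfrac{A'(x)-i}{s(x)\,[\,x-y+i(A(x)-A(y))\,]}$ for $w=x+iA(x)$, $z=y+iA(y)$, $x\neq y$; $\mathrm{Re}K_\Gamma$ is its real part. For a real-valued $K$ and distinct $z_1,z_2,z_3$, $\mathtt S[K](\mathbf z)=\sum_{\sigma\in S_3}K(z_{\sigma(1)},z_{\sigma(2)})K(z_{\sigma(1)},z_{\sigma(3)})$, $S_3$ the permutation group on three elements. *)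

(* Defs.v *)
From Stdlib Require Import Reals.
From Coquelicot Require Import Coquelicot.
Open Scope R_scope.

Definition in_J (a b : Rbar) (x : R) : Prop := Rbar_lt a x /\ Rbar_lt x b.

Definition s_fun (A : R -> R) (x : R) : R := sqrt (1 + (Derive A x) ^ 2).

(* Kernel K_Gamma(w,z), w = x + i A(x), z = y + i A(y), written in the parameters x, y:
   (A'(x) - i) / ( s(x) * [ x - y + i (A(x) - A(y)) ] )   (factor 1/(2 pi) omitted) *)
Definition K_Gamma (A : R -> R) (x y : R) : C :=
  Cdiv (Cminus (RtoC (Derive A x)) Ci)
       (Cmult (RtoC (s_fun A x))
              (Cplus (RtoC (x - y)) (Cmult Ci (RtoC (A x - A y))))).

Definition ReK_Gamma (A : R -> R) (x y : R) : R := Re (K_Gamma A x y).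

(* S[K](z1,z2,z3) = sum over sigma in S_3 of K(z_s1,z_s2) K(z_s1,z_s3), six terms written out *)
Definition S3 {T : Type} (K : T -> T -> R) (z1 z2 z3 : T) : R :=
    K z1 z2 * K z1 z3
  + K z1 z3 * K z1 z2
  + K z2 z1 * K z2 z3
  + K z2 z3 * K z2 z1
  + K z3 z1 * K z3 z2
  + K z3 z2 * K z3 z1.

(* Main.v *)
Require Import Defs.
From Stdlib Require Import Reals Lra Psatz.
From Coquelicot Require Import Coquelicot.
Open Scope R_scope.

Lemma inJ_between a b x y c : in_J a b x -> in_J a b y ->
  Rmin x y <= c <= Rmax x y -> in_J a b c.
Proof.
  intros [H1 H2] [H3 H4] Hc.
  unfold Rmin, Rmax in Hc.
  destruct (Rle_dec x y);
  destruct a; destruct b; simpl in *; split; simpl; try tauto; lra.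
Qed.

Lemma mvt_J a b f x y : (forall t, in_J a b t -> ex_derive f t) ->
  in_J a b x -> in_J a b y ->
  exists c, Rmin x y <= c <= Rmax x y /\ in_J a b c /\
     f y - f x = Derive f c * (y - x).
Proof.
  intros Hd Hx Hy.
  destruct (MVT_gen f x y (Derive f)) as [c [Hc Heq]]; cbv zeta in *.
  - intros t Ht. cbv zeta in Ht. apply Derive_correct. apply Hd.
    apply (inJ_between a b x y); auto; lra.
  - intros t Ht. cbv zeta in Ht. apply continuity_pt_filterlim.
    apply (ex_derive_continuous f). apply Hd.
    apply (inJ_between a b x y); auto; lra.
  - exists c. split; [lra|]. split; [apply (inJ_between a b x y); auto; lra|]. exact Heq.
Qed.

Lemma N_sign a b A sg (Hsg : sg = 1 \/ sg = -1)
  (HA1 : forall x, in_J a b x -> ex_derive A x)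
  (HA2 : forall x, in_J a b x -> ex_derive (Derive A) x)
  (Hs : forall x, in_J a b x -> 0 <= sg * Derive (Derive A) x) x y :
  in_J a b x -> in_J a b y ->
  0 <= sg * (Derive A x * (x - y) - (A x - A y)).
Proof.
  intros Hx Hy.
  destruct (mvt_J a b A x y HA1 Hx Hy) as [c [Hc [HcJ Heq]]].
  destruct (mvt_J a b (Derive A) x c HA2 Hx HcJ) as [d [Hd [HdJ Heq2]]].
  specialize (Hs d HdJ).
  replace (Derive A x * (x - y) - (A x - A y)) with
     ((Derive A c - Derive A x) * (y - x)) by lra.
  rewrite Heq2.
  unfold Rmin, Rmax in Hc.
  destruct (Rle_dec x y).
  - assert (x <= c) by lra.
    assert (0 <= sg * Derive (Derive A) d * (c - x)) by (apply Rmult_le_pos; lra).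
    assert (0 <= sg * Derive (Derive A) d * (c - x) * (y - x)) by (apply Rmult_le_pos; lra).
    nra.
  - assert (c <= x) by lra.
    assert (0 <= sg * Derive (Derive A) d * (x - c)) by (apply Rmult_le_pos; lra).
    assert (0 <= sg * Derive (Derive A) d * (x - c) * (x - y)) by (apply Rmult_le_pos; lra).
    nra.
Qed.

Lemma ReK_eq A x y : x <> y ->
  ReK_Gamma A x y =
   (Derive A x * (x - y) - (A x - A y)) *
   (s_fun A x / (s_fun A x ^ 2 * ((x - y) ^ 2 + (A x - A y) ^ 2))).
Proof.
  intros Hxy.
  assert (Hs : 0 < s_fun A x).
  { unfold s_fun. apply sqrt_lt_R0. nra. }
  assert (Hd : 0 < (x - y) ^ 2 + (A x - A y) ^ 2).
  { assert (Hn : x - y <> 0) by (intro; apply Hxy; lra). pose proof (Rsqr_pos_lt _ Hn). pose proof (pow2_ge_0 (A x - A y)). unfold Rsqr in *. simpl in *. lra. }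
  unfold ReK_Gamma, K_Gamma, Cdiv, Cmult, Cinv, Cminus, Cplus, Copp, RtoC, Ci, Re; simpl.
  simpl in Hd. field. split; [apply Rgt_not_eq; lra|]. split; [apply Rgt_not_eq; lra|].
  apply Rgt_not_eq.
  replace (s_fun A x * (x - y) * (s_fun A x * (x - y)) +
   s_fun A x * (A x - A y) * (s_fun A x * (A x - A y))) with
   ((s_fun A x * s_fun A x) * ((x - y) * ((x - y) * 1) + (A x - A y) * ((A x - A y) * 1))) by ring.
  apply Rmult_lt_0_compat; [apply Rmult_lt_0_compat|]; lra.
Qed.

Lemma ReK_pos_part A x y : x <> y ->
  0 < s_fun A x / (s_fun A x ^ 2 * ((x - y) ^ 2 + (A x - A y) ^ 2)).
Proof.
  intros Hxy.
  assert (Hs : 0 < s_fun A x).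
  { unfold s_fun. apply sqrt_lt_R0. nra. }
  assert (Hd : 0 < (x - y) ^ 2 + (A x - A y) ^ 2).
  { assert (Hn : x - y <> 0) by (intro; apply Hxy; lra). pose proof (Rsqr_pos_lt _ Hn). pose proof (pow2_ge_0 (A x - A y)). unfold Rsqr in *. simpl in *. lra. }
  apply Rdiv_lt_0_compat; [lra|]. apply Rmult_lt_0_compat; [nra|lra].
Qed.

Theorem theorem1p7 (a b : Rbar) (A : R -> R)
  (HA1 : forall x, in_J a b x -> ex_derive A x)
  (HA2 : forall x, in_J a b x -> ex_derive (Derive A) x)
  (HA2c : forall x, in_J a b x -> continuous (Derive (Derive A)) x)
  (Hsign : (forall x, in_J a b x -> 0 <= Derive (Derive A) x) \/
           (forall x, in_J a b x -> Derive (Derive A) x <= 0)) :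
  forall x1 x2 x3 : R, in_J a b x1 -> in_J a b x2 -> in_J a b x3 ->
    x1 <> x2 -> x1 <> x3 -> x2 <> x3 ->
    0 <= S3 (ReK_Gamma A) x1 x2 x3.
Proof.
  intros x1 x2 x3 H1 H2 H3 N12 N13 N23.
  assert (Hsg : exists sg, (sg = 1 \/ sg = -1) /\
            forall x, in_J a b x -> 0 <= sg * Derive (Derive A) x).
  { destruct Hsign as [H|H].
    - exists 1. split; [auto|]. intros x Hx. specialize (H x Hx). lra.
    - exists (-1). split; [auto|]. intros x Hx. specialize (H x Hx). lra. }
  destruct Hsg as [sg [Hsg Hs]].
  assert (K : forall x y, in_J a b x -> in_J a b y -> x <> y ->
             0 <= sg * ReK_Gamma A x y).
  { intros x y Hx Hy Hxy. rewrite ReK_eq by auto.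
    pose proof (N_sign a b A sg Hsg HA1 HA2 Hs x y Hx Hy).
    pose proof (ReK_pos_part A x y Hxy).
    rewrite <- Rmult_assoc. apply Rmult_le_pos; lra. }
  assert (N21 : x2 <> x1) by auto.
  assert (N31 : x3 <> x1) by auto.
  assert (N32 : x3 <> x2) by auto.
  pose proof (K _ _ H1 H2 N12). pose proof (K _ _ H1 H3 N13).
  pose proof (K _ _ H2 H1 N21). pose proof (K _ _ H2 H3 N23).
  pose proof (K _ _ H3 H1 N31). pose proof (K _ _ H3 H2 N32).
  assert (Hsq : sg * sg = 1) by (destruct Hsg; subst; lra).
  unfold S3.
  set (k12 := ReK_Gamma A x1 x2) in *. set (k13 := ReK_Gamma A x1 x3) in *.
  set (k21 := ReK_Gamma A x2 x1) in *. set (k23 := ReK_Gamma A x2 x3) in *.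
  set (k31 := ReK_Gamma A x3 x1) in *. set (k32 := ReK_Gamma A x3 x2) in *.
  assert (P : forall u v, 0 <= sg * u -> 0 <= sg * v -> 0 <= u * v).
  { intros u v Hu Hv. replace (u * v) with ((sg * u) * (sg * v)).
    - apply Rmult_le_pos; auto.
    - replace ((sg * u) * (sg * v)) with ((sg * sg) * (u * v)) by ring.
      rewrite Hsq; ring. }
  pose proof (P k12 k13). pose proof (P k13 k12). pose proof (P k21 k23).
  pose proof (P k23 k21). pose proof (P k31 k32). pose proof (P k32 k31).
  lra.
Qed.
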